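(* For any commutative Noetherian local ring $R$, the smallest full subcategory of $\mathrm{mod}\,R$ containing $\mathcal E(R)$ and closed under direct summands is all of $\mathrm{mod}\,R$.
   Context: $\mathrm{mod}\,R$ is the category of finitely generated $R$-modules. $\underline{\mathrm{ann}}_R(M)=\mathrm{ann}_R\underline{\mathrm{End}}_R(M)$, where $\underline{\mathrm{End}}_R(M)$ is $\mathrm{End}_R(M)$ modulo endomorphisms factoring through a free module. $\mathrm{ARann}_R(M)=\bigcap_{i>0}\mathrm{ann}_R\mathrm{Ext}^i_R(M,M\oplus R)$. $\mathcal{E}(R)$ is the full subcategory of modules $M$ with $\underline{\mathrm{ann}}_R(M)=\mathrm{ARann}_R(M)$. *)

(* Defs.v *)
(* Modules over a commutative ring R are lmodType R;
   finitely generated free modules are row-vector spaces 'rV[R]_n. *)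
From HB Require Import structures.
From mathcomp Require Import all_boot all_order all_algebra.
Set Implicit Arguments. Unset Strict Implicit. Unset Printing Implicit Defensive.
Import GRing.Theory.
Local Open Scope ring_scope.

Definition is_ideal (R : comNzRingType) (I : R -> Prop) : Prop :=
  [/\ I 0, (forall x y, I x -> I y -> I (x + y)) & (forall r x, I x -> I (r * x))].

Definition ideal_fingen (R : comNzRingType) (I : R -> Prop) : Prop :=
  exists s : seq R, forall x,
    I x <-> exists c : 'I_(size s) -> R, x = \sum_(i < size s) c i * s`_i.

Definition noetherian_ring (R : comNzRingType) : Prop :=
  forall I : R -> Prop, is_ideal I -> ideal_fingen I.

Definition maximal_ideal (R : comNzRingType) (I : R -> Prop) : Prop :=
  [/\ is_ideal I, ~ I 1 &
      forall J : R -> Prop, is_ideal J -> (forall x, I x -> J x) -> ~ J 1 ->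
        forall x, J x -> I x].

Definition local_ring (R : comNzRingType) : Prop :=
  exists m : R -> Prop, maximal_ideal m /\
    forall m' : R -> Prop, maximal_ideal m' -> forall x, m' x <-> m x.

Definition mod_fingen (R : comNzRingType) (M : lmodType R) : Prop :=
  exists s : seq M, forall x : M,
    exists c : 'I_(size s) -> R, x = \sum_(i < size s) c i *: s`_i.

(* ---------- Stable endomorphism ring annihilator ----------
   r kills the class of f in End(M)/P(M,M) iff r f factors through a free
   module (for f.g. M, through a finitely generated free module 'rV_k). *)
Definition factors_through_free (R : comNzRingType) (M N : lmodType R)
    (g : M -> N) : Prop :=
  exists (k : nat) (a : {linear M -> 'rV[R]_k}) (b : {linear 'rV[R]_k -> N}),
    forall x, g x = b (a x).

Definition stable_ann (R : comNzRingType) (M : lmodType R) (r : R) : Prop :=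
  forall f : {linear M -> M}, factors_through_free (fun x => r *: f x).

(* ---------- Free resolutions and Ext annihilators ----------
   A finite-rank free resolution of M:
     ... -> R^(n 2) --D 1--> R^(n 1) --D 0--> R^(n 0) --e--> M -> 0
   (maps act on row vectors by right multiplication). *)
Definition free_resolution (R : comNzRingType) (M : lmodType R)
    (n : nat -> nat) (D : forall j, 'M[R]_(n j.+1, n j))
    (e : {linear 'rV[R]_(n 0) -> M}) : Prop :=
  [/\ (forall y : M, exists v, e v = y),
      (forall v : 'rV[R]_(n 0), e v = 0 <-> exists w, v = w *m D 0%N) &
      (forall j (v : 'rV[R]_(n j.+1)),
          v *m D j = 0 <-> exists w, v = w *m D j.+1)].

(* r annihilates Ext^(j+1)_R(M,N) = H^(j+1)(Hom_R(P,N)):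
   for each cocycle phi : P_(j+1) -> N, r phi is a coboundary. Ext does not
   depend on the resolution; we quantify over all resolutions. *)
Definition Ext_ann (R : comNzRingType) (M N : lmodType R) (j : nat) (r : R)
    : Prop :=
  forall (n : nat -> nat) (D : forall j, 'M[R]_(n j.+1, n j))
         (e : {linear 'rV[R]_(n 0) -> M}),
    free_resolution D e ->
    forall phi : {linear 'rV[R]_(n j.+1) -> N},
      (forall w : 'rV[R]_(n j.+2), phi (w *m D j.+1) = 0) ->
      exists psi : {linear 'rV[R]_(n j) -> N},
        forall v : 'rV[R]_(n j.+1), r *: phi v = psi (v *m D j).

(* ARann_R(M) = intersection over i > 0 of ann Ext^i(M, M (+) R) *)
Definition ARann (R : comNzRingType) (M : lmodType R) (r : R) : Prop :=
  forall j : nat, Ext_ann M (M * R^o)%type j r.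

Definition in_E (R : comNzRingType) (M : lmodType R) : Prop :=
  forall r : R, stable_ann M r <-> ARann M r.

Definition is_summand (R : comNzRingType) (M N : lmodType R) : Prop :=
  exists (i : {linear M -> N}) (p : {linear N -> M}), forall x, p (i x) = x.

(* Main.v *)
Require Import Defs.
From HB Require Import structures.
From mathcomp Require Import all_boot all_order all_algebra.
From Stdlib Require Import ClassicalEpsilon.
Set Implicit Arguments. Unset Strict Implicit. Unset Printing Implicit Defensive.
Import GRing.Theory.
Local Open Scope ring_scope.
Lemma lift_lin (R : comNzRingType) (X : lmodType R) m q
  (f : {linear 'rV[R]_m -> X}) (g : {linear 'rV[R]_q -> X}) :
  (forall v, exists w, g w = f v) ->
  exists S : 'M[R]_(m, q), forall v, g (v *m S) = f v.
Proof.
move=> H.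
have [u Hu] := fin_all_exists (fun i : 'I_m => H (delta_mx 0 i)).
exists (\matrix_i u i) => v.
rewrite mulmx_sum_row linear_sum [v in RHS]row_sum_delta linear_sum.
by apply: eq_bigr => i _; rewrite rowK !linearZ Hu.
Qed.

Lemma mx_ext (R : comNzRingType) m n (A B : 'M[R]_(m, n)) :
  (forall v : 'rV[R]_m, v *m A = v *m B) -> A = B.
Proof. by move=> H; apply/row_matrixP => i; rewrite !rowE H. Qed.

Lemma res_DD (R : comNzRingType) (M : lmodType R) n
  (D : forall j, 'M[R]_(n j.+1, n j)) (e : {linear 'rV[R]_(n 0) -> M}) :
  free_resolution D e -> forall j, D j.+1 *m D j = 0.
Proof.
case=> _ _ H3 j; apply: mx_ext => v.
rewrite mulmx0 mulmxA; apply/H3; by exists v.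
Qed.

Lemma res_eD (R : comNzRingType) (M : lmodType R) n
  (D : forall j, 'M[R]_(n j.+1, n j)) (e : {linear 'rV[R]_(n 0) -> M}) :
  free_resolution D e -> forall w, e (w *m D 0%N) = 0.
Proof. by case=> _ H2 _ w; apply/H2; exists w. Qed.

Lemma homotopy (R : comNzRingType) (X : lmodType R) n
  (D : forall j, 'M[R]_(n j.+1, n j)) (e : {linear 'rV[R]_(n 0) -> X})
  (r : R) (G0 : 'M[R]_(n 0%N, n 0%N)) :
  free_resolution D e -> (forall v, e (v *m G0) = r *: e v) -> D 0%N *m G0 = 0 ->
  exists S : forall j, 'M[R]_(n j, n j.+1),
    forall j (v : 'rV[R]_(n j.+1)), r *: v = v *m S j.+1 *m D j.+1 + v *m D j *m S j.
Proof.
move=> Hres HG HDG.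
have DD := res_DD Hres.
case: (Hres) => _ He Hex.
pose I j (S : 'M[R]_(n j, n j.+1)) := (r%:M - D j *m S) *m D j = 0.
have base : exists S0 : 'M[R]_(n 0%N, n 1%N), I 0%N S0.
  have H1 : forall v : 'rV[R]_(n 0%N), exists w, w *m D 0%N = v *m (r%:M - G0).
    move=> v; have [|w Hw] := proj1 (He (v *m (r%:M - G0))); last by exists w. rewrite mulmxBr linearB /= HG mul_mx_scalar linearZ /=.
    by rewrite subrr.
  have [S0 HS0] := @lift_lin R (matrix R 1 (n 0%N)) _ _ (mulmxr (r%:M - G0)) (mulmxr (D 0%N)) H1.
  have E0 : S0 *m D 0%N = r%:M - G0 by apply: mx_ext => v; rewrite mulmxA; exact: HS0.
  exists S0; rewrite /I mulmxBl -mulmxA E0.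
  by rewrite mulmxBr HDG subr0 mul_scalar_mx mul_mx_scalar subrr.
have step : forall j (S : 'M[R]_(n j, n j.+1)), I j S ->
    exists S' : 'M[R]_(n j.+1, n j.+2), I j.+1 S' /\ S' *m D j.+1 = r%:M - D j *m S.
  move=> j S HS.
  have H1 : forall v : 'rV[R]_(n j.+1), exists w, w *m D j.+1 = v *m (r%:M - D j *m S).
    move=> v; have [|w Hw] := proj1 (Hex _ (v *m (r%:M - D j *m S))); last by exists w.
    by rewrite -mulmxA HS mulmx0.
  have [S' HS'] := @lift_lin R (matrix R 1 (n j.+1)) _ _ (mulmxr (r%:M - D j *m S)) (mulmxr (D j.+1)) H1.
  have E : S' *m D j.+1 = r%:M - D j *m S.
    by apply: mx_ext => v; rewrite mulmxA; exact: HS'.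
  exists S'; split => //.
  rewrite /I mulmxBl -mulmxA E mulmxBr mul_scalar_mx mul_mx_scalar.
  by rewrite mulmxA DD mul0mx subr0 subrr.
pose T j := {S : 'M[R]_(n j, n j.+1) | I j S}.
have stepT : forall j (x : T j), {y : T j.+1 | sval y *m D j.+1 = r%:M - D j *m sval x}.
  move=> j [S HS]; apply: constructive_indefinite_description.
  have [S' [H1 H2]] := step j S HS.
  by exists (exist _ S' H1).
have [S0 H0] := base.
pose F := fix F (j : nat) : T j :=
  match j return T j with 0%N => exist _ S0 H0 | j'.+1 => sval (stepT j' (F j')) end.
exists (fun j => sval (F j)) => j v /=.
rewrite -mulmxA (proj2_sig (stepT j (F j))) mulmxBr mul_mx_scalar mulmxA.
by rewrite subrK.
Qed.

Lemma factor_Ext (R : comNzRingType) (N X : lmodType R) (r : R) (k : nat)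
  (a : {linear N -> 'rV[R]_k}) (b : {linear 'rV[R]_k -> N}) :
  (forall x, r *: x = b (a x)) -> forall j, Ext_ann N X j r.
Proof.
move=> Hab j n D e Hres phi Hphi.
have [Hs He Hex] := Hres.
have [B HB] := @lift_lin R N _ _ b e (fun v => Hs (b v)).
have [A HA] := @lift_lin R (matrix R 1 k) _ _ (a \o e) (mulmxr 1%:M) (fun v => ex_intro _ (a (e v)) (mulmx1 _)).
have HA' : forall v, v *m A = a (e v) by move=> v; have := HA v; rewrite /= mulmx1.
have [||S HS] := homotopy (r := r) (G0 := A *m B) Hres.
- by move=> v; rewrite mulmxA HB HA' Hab.
- apply: mx_ext => w; rewrite mulmx0 !mulmxA HA' res_eD // linear0.
  by rewrite mul0mx.
exists (phi \o mulmxr (S j)) => v /=.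
by rewrite -linearZ /= HS linearD /= Hphi add0r.
Qed.
Definition submodP (R : comNzRingType) m (P : 'rV[R]_m -> Prop) :=
  [/\ P 0, (forall x y, P x -> P y -> P (x + y)) & (forall c x, P x -> P (c *: x))].

Lemma submodP_mul (R : comNzRingType) m k (P : 'rV[R]_m -> Prop) (A : 'M[R]_(k, m)) :
  submodP P -> (forall i, P (row i A)) -> forall w, P (w *m A).
Proof.
case=> P0 PD PZ HA w; rewrite mulmx_sum_row.
by elim/big_ind: _ => // i _; apply: PZ.
Qed.

Lemma noeth_sub (R : comNzRingType) : noetherian_ring R ->
  forall m (P : 'rV[R]_m -> Prop), submodP P ->
  exists k (G : 'M[R]_(k, m)), forall v, P v <-> exists w, v = w *m G.
Proof.
move=> HR; elim=> [|m IH] P HP.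
  exists 0%N, 0 => v; split=> [_|_]; first by exists 0; apply/rowP => -[].
  by rewrite thinmx0; case: HP.
have [P0 PD PZ] := HP.
pose i0 : 'I_(1 + m) := lshift m (ord0 : 'I_1).
pose I (x : R) := exists v : 'rV[R]_(1 + m), P v /\ v 0 (i0) = x.
have II : is_ideal I.
  split.
  - by exists 0; rewrite mxE.
  - move=> x y [v [Pv <-]] [u [Pu <-]]; exists (v + u); split; first exact: PD.
    by rewrite mxE.
  - move=> c x [v [Pv <-]]; exists (c *: v); split; first exact: PZ.
    by rewrite mxE.
have [s Hs] := HR I II.
have sI : forall i : 'I_(size s), exists v : 'rV[R]_(1 + m), P v /\ v 0 (i0) = s`_i.
  move=> i; apply/Hs; exists (fun j => (j == i)%:R).
  rewrite (bigD1 i) //= eqxx mul1r big1 ?addr0 // => j /negbTE ->; by rewrite mul0r.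
have [V HV] := fin_all_exists sI.
pose P' (u : 'rV[R]_m) := P (row_mx (0 : 'rV[R]_1) u).
have HP' : submodP P'.
  split; rewrite /P'.
  - by rewrite row_mx0.
  - by move=> x y Px Py; rewrite -[0 : 'rV_1]addr0 -add_row_mx; apply: PD.
  - by move=> c x Px; rewrite -(scaler0 _ c) -scale_row_mx; apply: PZ.
have [k [G HG]] := IH P' HP'.
pose VM : 'M[R]_(size s, 1 + m) := \matrix_i V i.
exists (size s + k)%N, (col_mx VM (row_mx 0 G)) => v; split.
- move=> Pv.
  have Iv : I (v 0 (i0)) by exists v.
  have [c Hc] := (Hs _).1 Iv.
  pose cr : 'rV[R]_(size s) := \row_i c i.
  pose u : 'rV[R]_(1 + m) := v - cr *m VM.
  have Hv : v = cr *m VM + u by rewrite /u addrC subrK.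
  have Pu : P u.
    apply: PD => //; rewrite -scaleN1r; apply: PZ.
    by apply: submodP_mul => // i; rewrite rowK; case: (HV i).
  have u0 : lsubmx u = 0.
    apply/rowP => j; rewrite !mxE (ord1 j).
    apply/eqP; rewrite subr_eq0; apply/eqP.
    rewrite [LHS]Hc; apply: eq_bigr => i _; rewrite !mxE; congr (_ * _).
    by case: (HV i) => _ <-.
  have Pu' : P' (rsubmx u) by rewrite /P' -u0 hsubmxK.
  have [w Hw] := (HG _).1 Pu'.
  exists (row_mx cr w); rewrite mul_row_col.
  change (v = cr *m VM + @mulmx R 1 k (1 + m) w (row_mx 0 G)).
  rewrite mul_mx_row mulmx0 -Hw -u0 hsubmxK.
  by rewrite {1}Hv.
- move=> [w ->]; apply: submodP_mul => // i.
  rewrite -[i]splitK; case: (split i) => j /=.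
    by rewrite rowKu rowK; case: (HV j).
  rewrite rowKd; change (P (@row _ k (1 + m) j (row_mx 0 G))); rewrite row_row_mx row0.
  by apply/(HG (row j G)).2; exists (delta_mx 0 j); rewrite rowE.
Qed.

Section Res.
Variables (R : comNzRingType) (HR : noetherian_ring R).

Lemma kerP_sub k m (D : 'M[R]_(k, m)) : submodP (fun v : 'rV[R]_k => v *m D = 0).
Proof.
split; first by rewrite mul0mx.
- by move=> x y Hx Hy; rewrite mulmxDl Hx Hy addr0.
- by move=> c x Hx; rewrite -scalemxAl Hx scaler0.
Qed.

Definition gensOf m (P : 'rV[R]_m -> Prop) (HP : submodP P) : {k : nat & 'M[R]_(k, m)} :=
  let x := constructive_indefinite_description _ (noeth_sub HR HP) in
  existT _ (proj1_sig x) (proj1_sig (constructive_indefinite_description _ (proj2_sig x))).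

Lemma gensOfP m (P : 'rV[R]_m -> Prop) (HP : submodP P) :
  forall v, P v <-> exists w, v = w *m projT2 (gensOf HP).
Proof.
rewrite /gensOf /=.
set x := constructive_indefinite_description _ _.
exact: (proj2_sig (constructive_indefinite_description _ (proj2_sig x))).
Qed.

Variables (X : lmodType R) (m : nat) (e : {linear 'rV[R]_m -> X}).

Lemma kerE_sub : submodP (fun v => e v = 0).
Proof.
split; first by rewrite linear0.
- by move=> x y Hx Hy; rewrite linearD /= Hx Hy addr0.
- by move=> c x Hx; rewrite linearZ /= Hx scaler0.
Qed.

Fixpoint st (j : nat) : {a : nat & {b : nat & 'M[R]_(b, a)}} :=
  match j with
  | 0%N => existT _ m (gensOf kerE_sub)
  | j'.+1 => existT _ (projT1 (projT2 (st j'))) (gensOf (kerP_sub (projT2 (projT2 (st j')))))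
  end.

Definition rn j := projT1 (st j).
Definition rD j : 'M[R]_(rn j.+1, rn j) := projT2 (projT2 (st j)).
Definition re : {linear 'rV[R]_(rn 0) -> X} := e.

Lemma res_ok : (forall y, exists v, e v = y) -> free_resolution rD re.
Proof.
move=> Hs; split => //.
- move=> v; exact: (gensOfP kerE_sub v).
- move=> j v; exact: (gensOfP (kerP_sub (projT2 (projT2 (st j)))) v).
Qed.
End Res.
Section Comb.
Variables (R : comNzRingType) (M : lmodType R) (k : nat) (f : 'I_k -> M).
Definition comb (v : 'rV[R]_k) : M := \sum_i v 0 i *: f i.
Fact comb_is_linear : linear comb.
Proof.
move=> a u v; rewrite /comb scaler_sumr -big_split; apply: eq_bigr => i _ /=.
by rewrite !mxE scalerDl scalerA.
Qed.
HB.instance Definition _ := GRing.isLinear.Build R 'rV[R]_k M _ comb comb_is_linear.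
End Comb.

Section Ker.
Variables (R : comNzRingType) (M : lmodType R) (m : nat) (e : {linear 'rV[R]_m -> M}).
Definition kerpred : {pred 'rV[R]_m} := fun x => e x == 0.
Fact kerpred_closed : submod_closed kerpred.
Proof.
split; first by rewrite /kerpred unfold_in /= linear0.
by move=> a u v; rewrite !unfold_in /= => /eqP Hu /eqP Hv; rewrite linearP /= Hu Hv scaler0 addr0.
Qed.
HB.instance Definition _ := GRing.isSubmodClosed.Build R 'rV[R]_m kerpred kerpred_closed.
Inductive kerT : predArgType := KerT x & x \in kerpred.
Definition kval w : 'rV[R]_m := let: KerT u _ := w in u.
HB.instance Definition _ := [isSub of kerT for kval].
HB.instance Definition _ := [Choice of kerT by <:].
HB.instance Definition _ := [SubChoice_isSubZmodule of kerT by <:].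
HB.instance Definition _ := [SubZmodule_isSubLmodule of kerT by <:].
Lemma kval_is_linear : linear kval. Proof. by []. Qed.
HB.instance Definition _ := GRing.isLinear.Build R kerT 'rV[R]_m _ kval kval_is_linear.
End Ker.
Lemma fingen_of_surj (R : comNzRingType) (X : lmodType R) k (e : {linear 'rV[R]_k -> X}) :
  (forall y, exists v, e v = y) -> mod_fingen X.
Proof.
move=> Hs; exists [seq e (delta_mx 0 j) | j <- enum 'I_k] => x.
have [v <-] := Hs x.
pose r := [seq (v 0 j, e (delta_mx 0 j)) | j <- enum 'I_k].
have Es : [seq e (delta_mx 0 j) | j <- enum 'I_k] = map snd r by rewrite /r -map_comp.
rewrite Es.
exists (fun i => (nth (0, 0) r i).1).
have -> : \sum_(i < size (map snd r)) (nth (0, 0) r i).1 *: (map snd r)`_i =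
          \sum_(p <- r) p.1 *: p.2.
  rewrite (big_nth (0,0)) big_mkord size_map; apply: eq_bigr => i _.
  by rewrite (nth_map (0,0)).
rewrite big_map big_enum /= [v in LHS]row_sum_delta linear_sum.
by apply: eq_bigr => j _; rewrite linearZ.
Qed.

Section LinCons.
Variables (R : comNzRingType) (U A B : lmodType R).
Variables (f : {linear U -> A}) (g : {linear U -> B}).
Definition lpair (x : U) : (A * B)%type := (f x, g x).
Fact lpair_is_linear : linear lpair.
Proof. by move=> a x y; rewrite /lpair !linearP. Qed.
HB.instance Definition _ := GRing.isLinear.Build R U (A * B)%type _ lpair lpair_is_linear.
Definition lzero (x : U) : A := 0.
Fact lzero_is_linear : linear lzero.
Proof. by move=> a x y; rewrite /lzero scaler0 addr0. Qed.
HB.instance Definition _ := GRing.isLinear.Build R U A _ lzero lzero_is_linear.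
End LinCons.

Section LinRow.
Variables (R : comNzRingType) (U : lmodType R) (p q : nat).
Variables (f : {linear U -> 'rV[R]_p}) (g : {linear U -> 'rV[R]_q}).
Definition lrow (x : U) : 'rV[R]_(p + q) := row_mx (f x) (g x).
Fact lrow_is_linear : linear lrow.
Proof. move=> a x y; rewrite /lrow !linearP /=; apply/matrixP => i j; rewrite !mxE; by case: splitP => k _; rewrite !mxE. Qed.
HB.instance Definition _ := GRing.isLinear.Build R U 'rV[R]_(p + q) _ lrow lrow_is_linear.
End LinRow.

Section KerLift.
Variables (R : comNzRingType) (F M Y : lmodType R).
Variables (e : {linear F -> M}) (h : {linear F -> Y}).
Hypothesis Hs : forall y, exists z, e z = y.
Hypothesis Hk : forall z, e z = 0 -> h z = 0.
Definition sec (y : M) : F := proj1_sig (constructive_indefinite_description _ (Hs y)).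
Lemma secP y : e (sec y) = y.
Proof. exact: proj2_sig (constructive_indefinite_description _ (Hs y)). Qed.
Definition hbar (y : M) : Y := let _ := Hk in h (sec y).
Lemma hbarE z : hbar (e z) = h z.
Proof.
rewrite /hbar; apply/eqP; rewrite -subr_eq0 -linearB; apply/eqP; apply: Hk.
by rewrite linearB /= secP subrr.
Qed.
Fact hbar_is_linear : linear hbar.
Proof.
move=> a x y; have := hbarE (a *: sec x + sec y).
by rewrite linearP /= !secP => ->; rewrite linearP.
Qed.
HB.instance Definition _ := GRing.isLinear.Build R M Y _ hbar hbar_is_linear.
End KerLift.

Lemma ker_lift (R : comNzRingType) (F M Y : lmodType R)
  (e : {linear F -> M}) (h : {linear F -> Y}) :
  (forall y, exists z, e z = y) -> (forall z, e z = 0 -> h z = 0) ->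
  exists hb : {linear M -> Y}, forall z, hb (e z) = h z.
Proof. move=> Hs Hk; exists (@hbar R F M Y e h Hs Hk); exact: hbarE. Qed.

Theorem mainTheorem17 (R : comNzRingType) :
  noetherian_ring R -> local_ring R ->
  forall M : lmodType R, mod_fingen M ->
    exists N : lmodType R, [/\ mod_fingen N, in_E N & is_summand M N].
Proof.
move=> HR _ M [s Hs].
pose n0 := size s.
pose eM : {linear 'rV[R]_n0 -> M} := comb (fun i : 'I_n0 => s`_i).
have eMs : forall y, exists v, eM v = y.
  move=> y; have [c ->] := Hs y; exists (\row_i c i).
  by rewrite /= /comb; apply: eq_bigr => i _; rewrite mxE.
have [k1 [DM HDM]] := noeth_sub HR (kerE_sub eM).
pose Om := kerT eM.
have rowin : forall i, row i DM \in kerpred eM.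
  move=> i; rewrite unfold_in; apply/eqP; apply/HDM.
  by exists (delta_mx 0 i); rewrite rowE.
pose om : {linear 'rV[R]_k1 -> Om} := comb (fun i => KerT (rowin i)).
have omE : forall w, kval (om w) = w *m DM.
  move=> w; rewrite /= /comb linear_sum mulmx_sum_row; apply: eq_bigr => i _.
  by rewrite linearZ.
have kvalK : forall y : Om, eM (kval y) = 0.
  by case=> x Hx /=; have := Hx; rewrite unfold_in => /eqP.
have oms : forall y : Om, exists w, om w = y.
  move=> y; have [w Hw] := (HDM (kval y)).1 (kvalK y).
  by exists w; apply: val_inj; rewrite /= omE.
pose N := (M * Om)%type.
pose eN : {linear 'rV[R]_(n0 + k1) -> N} :=
  lpair (eM \o @lsubmx R 1 n0 k1) (om \o @rsubmx R 1 n0 k1).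
have eNs : forall y, exists v, eN v = y.
  case=> x y; have [v Hv] := eMs x; have [w Hw] := oms y.
  by exists (row_mx v w); rewrite /= /lpair /= row_mxKl row_mxKr Hv Hw.
exists N; split.
- exact: fingen_of_surj eNs.
- move=> r; split.
  + move=> Hst j.
    have [k [a [b Hab]]] := Hst idfun.
    exact: (factor_Ext (k := k) (a := a) (b := b)).
  + move=> HA.
    have Hres := res_ok HR eNs.
    have HE := HA 0%N _ _ _ Hres.
    have [_ Hex0 Hexj] := Hres.
    pose D := rD HR eN.
    have DD := res_DD Hres.
    have H1 : forall v : 'rV[R]_(rn HR eN 1), exists w,
        mulmxr DM w = ((@lsubmx R 1 n0 k1) \o mulmxr (D 0%N)) v.
      move=> v; have [|w Hw] := (HDM (lsubmx (v *m D 0%N))).1; last by exists w; rewrite /= Hw.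
      have := res_eD Hres v; rewrite /= /lpair => -[] //.
    have [L HL] := lift_lin H1.
    have HL' : forall v, v *m L *m DM = @lsubmx R 1 n0 k1 (v *m D 0%N) by move=> v; have := HL v; rewrite /=.
    pose phi : {linear 'rV[R]_(rn HR eN 1) -> (N * R^o)%type} :=
      lpair (lpair (@lzero R _ M) (om \o mulmxr L)) (@lzero R _ R^o).
    have [|psi Hpsi] := HE phi.
      move=> w /=; rewrite /lpair /lzero /=; congr (_, _); congr (_, _).
      apply: val_inj; change (kval (om (w *m rD HR eN 1 *m L)) = kval (0 : Om)).
      rewrite omE HL' -mulmxA DD mulmx0.
      by apply/rowP => i; rewrite !mxE.
    pose q : {linear 'rV[R]_n0 -> Om} :=
      (@snd M Om) \o (@fst N R^o) \o psi \o mulmxr (row_mx 1%:M 0 : 'M[R]_(n0, n0 + k1)).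
    have qE : forall y : Om, q (kval y) = r *: y.
      move=> y.
      have Hx : kval y *m (row_mx 1%:M 0 : 'M[R]_(n0, n0 + k1)) = row_mx (kval y) 0.
        by rewrite mul_mx_row mulmx1 mulmx0.
      have [v Hv] : exists v, row_mx (kval y) 0 = v *m D 0%N.
        apply/Hex0; rewrite /= /lpair /= row_mxKl row_mxKr kvalK linear0 //.
      have Hvy : om (v *m L) = y.
        apply: val_inj; change (kval (om (v *m L)) = kval y).
        by rewrite omE HL' -Hv row_mxKl.
      by rewrite /q /= Hx Hv -Hpsi /= Hvy.
    pose h : {linear 'rV[R]_n0 -> 'rV[R]_n0} := mulmxr (r%:M) \- (@kval R M n0 eM \o q).
    have hk : forall z, eM z = 0 -> h z = 0.
      move=> z Hz.
      have Hin : z \in kerpred eM by rewrite unfold_in; apply/eqP.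
      have := qE (KerT Hin); rewrite /= => ->.
      by rewrite linearZ /= mul_mx_scalar scalerN subrr.
    have [hb Hhb] := ker_lift eMs hk.
    have hbE : forall x, eM (hb x) = r *: x.
      move=> x; have [z <-] := eMs x; rewrite Hhb /= linearB /= kvalK subr0.
      by rewrite mul_mx_scalar linearZ.
    move=> f.
    exists (n0 + n0)%N, (lrow (hb \o (@fst M Om)) (@kval R M n0 eM \o (@snd M Om))).
    exists (f \o lpair (eM \o @lsubmx R 1 n0 n0) (q \o @rsubmx R 1 n0 n0)).
    case=> x y; rewrite /= /lrow /lpair /= row_mxKl row_mxKr hbE.
    by have := qE y; rewrite /q /= => ->; rewrite -linearZ.
- by exists (lpair idfun (@lzero R M Om)), fst.
Qed.
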